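(* Let $M=(\mathcal S,\mathcal A,\bar r_t,p_t,s_1)$ be a possibly non-time-homogeneous MDP (mean rewards $\bar r_t$ and transition probabilities $p_t$ depending on the step $t$) and $M'=(\mathcal S,\mathcal A,\bar r',p',s_1)$ a time-homogeneous communicating MDP on the same finite state and action sets, with optimal stationary policy $\pi'^*$. Suppose that for all $t=1,\dots,T$ and all states $s$, \[|\bar r_t(s,\pi'^*(s))-\bar r'(s,\pi'^*(s))|\le\Delta^r_t(s),\qquad \|p_t(\cdot\mid s,\pi'^*(s))-p'(\cdot\mid s,\pi'^*(s))\|_1\le\Delta^p_t(s).\] If $\pi'^*$ is performed on $M$ for $T$ steps and $s_t$ denotes the state visited at step $t$, then \[T\rho^*(M')-\sum_{t=1}^T\bar r_t(s_t,\pi'^*(s_t))\le\sum_{t=1}^T\big(\Lambda'\Delta^p_t(s_t)+\Delta^r_t(s_t)\big)+\sum_{t=1}^T\Big(\sum_{s'}p_t(s'\mid s_t,\pi'^*(s_t))\,\lambda'(s')-\lambda'(s_t)\Big),\] where $\lambda'$ is the bias function and $\Lambda'=\max_s\lambda'(s)-\min_s\lambda'(s)$ the bias span of $\pi'^*$ on $M'$.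
   Context: A communicating MDP is one in which for any two states $s,s'$, starting in $s$ one can reach $s'$ with positive probability by choosing appropriate actions. For a stationary policy $\pi$, $\rho(M',\pi)=\lim_{n\to\infty}\frac1n\mathbb E[\sum_{t=1}^nr_t]$ and $\rho^*(M')=\max_\pi\rho(M',\pi)$; $\pi'^*$ attains $\rho^*(M')$. The bias function $\lambda'$ of $\pi'^*$ on $M'$ satisfies the Poisson equation $\rho^*(M')-\bar r'(s,\pi'^*(s))=\sum_{s'}p'(s'\mid s,\pi'^*(s))\lambda'(s')-\lambda'(s)$ for all $s$. *)

(* Defs.v *)
From HB Require Import structures.
From mathcomp Require Import all_boot all_order all_algebra.
From mathcomp Require Import all_classical all_reals all_analysis.
Set Implicit Arguments. Unset Strict Implicit. Unset Printing Implicit Defensive.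
Import Order.TTheory GRing.Theory Num.Theory numFieldNormedType.Exports.
Local Open Scope ring_scope.

Section MDP.
Variables (R : realType) (S A : finType).

Definition stochastic (p : S -> A -> S -> R) : Prop :=
  forall s a, (forall s', 0 <= p s a s') /\ \sum_(s' : S) p s a s' = 1.

Definition communicating (p : S -> A -> S -> R) : Prop :=
  forall s s' : S, connect [rel x y | [exists a : A, 0 < p x a y]] s s'.

(* Distribution of the state at step n+1 when the stationary deterministic
   policy pi is run on the homogeneous MDP (p, s1) (step 1 is the Dirac at s1). *)
Fixpoint state_dist (p : S -> A -> S -> R) (pi : S -> A) (s1 : S) (n : nat)
  : S -> R :=
  match n with
  | 0 => fun s => if s == s1 then 1 else 0
  | n'.+1 => fun s' =>
      \sum_(s : S) state_dist p pi s1 n' s * p s (pi s) s'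
  end.

Definition avg_reward (r : S -> A -> R) (p : S -> A -> S -> R) (s1 : S)
  (pi : S -> A) : R :=
  let u : R^nat := fun n : nat => n%:R^-1 *
    \sum_(0 <= t < n) \sum_(s : S) state_dist p pi s1 t s * r s (pi s) in
  limn u.

Definition bias_span (f : S -> R) (s0 : S) : R :=
  \big[Num.max/f s0]_(s : S) f s - \big[Num.min/f s0]_(s : S) f s.

End MDP.

(* Main.v *)
Require Import Defs.
From HB Require Import structures.
From mathcomp Require Import all_boot all_order all_algebra.
From mathcomp Require Import all_classical all_reals all_analysis.
Import Order.TTheory GRing.Theory Num.Theory numFieldNormedType.Exports.
From mathcomp Require Import ring lra.
Local Open Scope ring_scope.

Lemma le_bmax (R : realType) (S : finType) (f : S -> R) (x : R) (s : S) :
  f s <= \big[Num.max/x]_(i : S) f i.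
Proof.
have : s \in index_enum S by rewrite mem_index_enum.
rewrite unlock /=; elim: (index_enum S) => // a l IH.
rewrite inE => /orP [/eqP -> | /IH H] /=; rewrite le_max ?lexx //.
by rewrite H orbT.
Qed.

Lemma ge_bmin (R : realType) (S : finType) (f : S -> R) (x : R) (s : S) :
  \big[Num.min/x]_(i : S) f i <= f s.
Proof.
have : s \in index_enum S by rewrite mem_index_enum.
rewrite unlock /=; elim: (index_enum S) => // a l IH.
rewrite inE => /orP [/eqP -> | /IH H] /=; rewrite ge_min ?lexx //.
by rewrite H orbT.
Qed.

Lemma key (R : realType) (S : finType) (q1 q2 : S -> R) (lam : S -> R) (D : R) (s0 : S) :
  \sum_s q1 s = 1 -> \sum_s q2 s = 1 ->
  \sum_s `|q1 s - q2 s| <= D ->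
  \sum_s q2 s * lam s - \sum_s q1 s * lam s <=
  (\big[Num.max/lam s0]_(s : S) lam s - \big[Num.min/lam s0]_(s : S) lam s) * D.
Proof.
move=> h1 h2 hD.
set M := \big[Num.max/lam s0]_(s : S) lam s.
set m := \big[Num.min/lam s0]_(s : S) lam s.
have Hm : forall s, m <= lam s by move=> s; exact: ge_bmin.
have HM : forall s, lam s <= M by move=> s; exact: le_bmax.
have L0 : 0 <= M - m by rewrite subr_ge0; apply: le_trans (Hm s0) (HM s0).
have -> : \sum_s q2 s * lam s - \sum_s q1 s * lam s
          = \sum_s (q2 s - q1 s) * (lam s - m).
  have E : \sum_s (q2 s - q1 s) * (lam s - m)
     = \sum_s q2 s * lam s - \sum_s q1 s * lam s - (\sum_s q2 s - \sum_s q1 s) * m.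
    rewrite -!sumrB mulr_suml -sumrB; apply: eq_bigr => i _; ring.
  by rewrite E h1 h2 subrr mul0r subr0.
apply: le_trans (_ : \sum_s `|q1 s - q2 s| * (M - m) <= _); last first.
  by rewrite -mulr_suml mulrC ler_wpM2l.
apply: ler_sum => i _.
have li : 0 <= lam i - m by rewrite subr_ge0.
apply: le_trans (_ : `|q2 i - q1 i| * (lam i - m) <= _).
  by rewrite ler_wpM2r // real_ler_norm ?realB ?num_real.
by rewrite distrC ler_wpM2l // lerD2r.
Qed.

Theorem lemma2 (R : realType) (S A : finType) (s1 : S)
  (* non-homogeneous MDP M = (S, A, r_t, p_t, s1) *)
  (r : nat -> S -> A -> R) (p : nat -> S -> A -> S -> R)
  (* homogeneous communicating MDP M' = (S, A, r', p', s1) *)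
  (r' : S -> A -> R) (p' : S -> A -> S -> R)
  (pistar : {ffun S -> A}) (lambda' : S -> R)
  (T : nat) (DeltaR DeltaP : nat -> S -> R) (st : nat -> S) :
  (forall t, (1 <= t <= T)%N -> stochastic (p t)) ->
  stochastic p' ->
  communicating p' ->
  (* pistar is an optimal stationary policy of M' *)
  (forall pi : {ffun S -> A},
      avg_reward r' p' s1 pi <= avg_reward r' p' s1 pistar) ->
  (* lambda' is the bias of pistar on M': Poisson equation *)
  (forall s, avg_reward r' p' s1 pistar - r' s (pistar s)
             = \sum_(s' : S) p' s (pistar s) s' * lambda' s' - lambda' s) ->
  (forall t s, (1 <= t <= T)%N ->
     `|r t s (pistar s) - r' s (pistar s)| <= DeltaR t s) ->
  (forall t s, (1 <= t <= T)%N ->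
     \sum_(s' : S) `|p t s (pistar s) s' - p' s (pistar s) s'| <= DeltaP t s) ->
  (* st is a trajectory of pistar run on M for T steps *)
  st 1%N = s1 ->
  (forall t, (1 <= t < T)%N ->
     0 < p t (st t) (pistar (st t)) (st t.+1)) ->
  T%:R * avg_reward r' p' s1 pistar
    - \sum_(1 <= t < T.+1) r t (st t) (pistar (st t))
  <= \sum_(1 <= t < T.+1)
        (bias_span lambda' s1 * DeltaP t (st t) + DeltaR t (st t))
     + \sum_(1 <= t < T.+1)
        (\sum_(s' : S) p t (st t) (pistar (st t)) s' * lambda' s'
         - lambda' (st t)).
Proof.
move=> Hp Hp' _ _ Hpois HR HP _ _.
set rho := avg_reward r' p' s1 pistar.
have -> : T%:R * rho = \sum_(1 <= t < T.+1) rho.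
  by rewrite sumr_const_nat subn1 /= mulr_natl.
rewrite -sumrB -big_split /=; apply: ler_sum_nat => t /andP [t1 tT].
have tT' : (1 <= t <= T)%N by rewrite t1 -ltnS.
set s := st t.
have := Hpois s; have := HR t s tT'; have := HP t s tT'.
have [_ h1] := Hp t tT' s (pistar s).
have [_ h2] := Hp' s (pistar s).
move=> /(@key _ _ _ _ lambda' _ s1 h1 h2) K Hr Hps.
rewrite /bias_span in K *.
have := ler_norml (r t s (pistar s) - r' s (pistar s)) (DeltaR t s).
rewrite Hr => /esym /andP [Hr1 Hr2].
have : rho = r' s (pistar s) + (\sum_(s' : S) p' s (pistar s) s' * lambda' s' - lambda' s).
  by rewrite -Hps /rho addrC subrK.
move=> ->.
lra.
Qed.
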